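(* Let $g:\mathbb{R}^m\to\mathbb{R}$ be a continuous convex function and $X\subset\mathbb{R}^m$ a closed convex set, and suppose $\mathbf{X}^*=\{x\in X: g(x)\le0\}$ is non-empty. Assume there is $K\ge0$ with $\|\nabla g^+(x)\|\le K$ for all $x$. Let $\{\alpha(t)\},\{\beta(t)\}$ satisfy (a) $\alpha(t)\in[0,1]$, $\sum_{t=0}^\infty\alpha(t)=\infty$, $\sum_{t=0}^\infty\alpha^2(t)<\infty$; (b) $\beta(t)\ge0$, $\sum_{t=0}^\infty\beta(t)=\infty$, $\sum_{t=0}^\infty\beta^2(t)<\infty$. Define the iteration $$\xi(t)=x(t)-\beta(t)\nabla g^+(x(t)),\quad \varphi(t)=\alpha(t)\big(\xi(t)-P_X(\xi(t))\big),\quad x(t+1)=\xi(t)-\varphi(t).$$ Then $x(t)$ converges to a vector $x^*\in\mathbf{X}^*$.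
   Context: $g^+(x)=\max[g(x),0]$; $\nabla g^+(x)$ denotes a subgradient of $g^+$ at $x$; $P_X$ is the Euclidean projection onto $X$. *)

(* Defs.v *)
From HB Require Import structures.
From mathcomp Require Import all_boot all_order all_algebra.
From mathcomp Require Import all_classical all_reals all_analysis.
Set Implicit Arguments. Unset Strict Implicit. Unset Printing Implicit Defensive.
Import Order.TTheory GRing.Theory Num.Theory.
Import numFieldNormedType.Exports.
Local Open Scope ring_scope.
Local Open Scope classical_set_scope.

Section Defs.
Variables (R : realType) (m : nat).

Definition dotv (u v : 'rV[R]_m) : R := \sum_(i < m) u 0 i * v 0 i.
Definition enorm (u : 'rV[R]_m) : R := Num.sqrt (dotv u u).

Definition convex_fun (g : 'rV[R]_m -> R) : Prop :=
  forall x y (a : R), 0 <= a <= 1 ->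
    g (a *: x + (1 - a) *: y) <= a * g x + (1 - a) * g y.

Definition gplus (g : 'rV[R]_m -> R) (x : 'rV[R]_m) : R := Num.max (g x) 0.

Definition is_subgradient (f : 'rV[R]_m -> R) (x d : 'rV[R]_m) : Prop :=
  forall y, f x + dotv d (y - x) <= f y.

Definition is_projection (X : set 'rV[R]_m) (P : 'rV[R]_m -> 'rV[R]_m) : Prop :=
  forall z, X (P z) /\ forall y, X y -> enorm (z - P z) <= enorm (z - y).

End Defs.

(* Main.v *)
Require Import Defs.
From HB Require Import structures.
From mathcomp Require Import all_boot all_order all_algebra.
From mathcomp Require Import all_classical all_reals all_analysis.
From mathcomp Require Import ring lra.
Set Implicit Arguments. Unset Strict Implicit. Unset Printing Implicit Defensive.
Import Order.TTheory GRing.Theory Num.Theory.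
Import numFieldNormedType.Exports.
Local Open Scope ring_scope.
Local Open Scope classical_set_scope.
Section Inner.
Variables (R : realType) (m : nat).
Implicit Types (u v w : 'rV[R]_m).

Lemma dotvC u v : dotv u v = dotv v u.
Proof. by apply: eq_bigr => i _; rewrite mulrC. Qed.
Lemma dotvDl u w v : dotv (u + w) v = dotv u v + dotv w v.
Proof. by rewrite /dotv -big_split; apply: eq_bigr => i _; rewrite mxE mulrDl. Qed.
Lemma dotvZl (a : R) u v : dotv (a *: u) v = a * dotv u v.
Proof. by rewrite /dotv mulr_sumr; apply: eq_bigr => i _; rewrite mxE mulrA. Qed.
Lemma dotvNl u v : dotv (- u) v = - dotv u v.
Proof. by rewrite -scaleN1r dotvZl mulN1r. Qed.
Lemma dotvBl u w v : dotv (u - w) v = dotv u v - dotv w v.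
Proof. by rewrite dotvDl dotvNl. Qed.
Lemma dotvDr u w v : dotv v (u + w) = dotv v u + dotv v w.
Proof. by rewrite dotvC dotvDl !(dotvC v). Qed.
Lemma dotvZr (a : R) u v : dotv v (a *: u) = a * dotv v u.
Proof. by rewrite dotvC dotvZl dotvC. Qed.
Lemma dotvBr u w v : dotv v (u - w) = dotv v u - dotv v w.
Proof. by rewrite dotvC dotvBl !(dotvC v). Qed.
Lemma dotvv_ge0 u : 0 <= dotv u u.
Proof. by apply: sumr_ge0 => i _; rewrite -expr2 sqr_ge0. Qed.
Lemma dotv0r u : dotv u 0 = 0.
Proof. by rewrite -(scale0r 0) dotvZr mul0r. Qed.
Lemma dotvv_eq0 u : dotv u u = 0 -> u = 0.
Proof.
move=> /eqP; rewrite psumr_eq0; last by move=> i _; rewrite -expr2 sqr_ge0.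
move=> /allP H; apply/rowP => i; rewrite mxE.
have := H i (mem_index_enum i); rewrite /= mulf_eq0 orbb => /eqP. done.
Qed.

Lemma enorm_ge0 u : 0 <= enorm u.
Proof. exact: sqrtr_ge0. Qed.
Lemma enorm_sqr u : enorm u ^+ 2 = dotv u u.
Proof. by rewrite sqr_sqrtr // dotvv_ge0. Qed.

Lemma cauchy_schwarz u v : dotv u v ^+ 2 <= dotv u u * dotv v v.
Proof.
have [v0|vpos] := eqVneq (dotv v v) 0.
  by rewrite (dotvv_eq0 v0) !dotv0r expr0n /= mulr0.
have vp : 0 < dotv v v by rewrite lt_def vpos dotvv_ge0.
have := dotvv_ge0 (dotv v v *: u - dotv u v *: v).
rewrite !(dotvBl, dotvBr, dotvZl, dotvZr) (dotvC v u) => H.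
have : 0 <= dotv v v * (dotv v v * dotv u u - dotv u v ^+ 2) by nra.
by rewrite pmulr_rge0 // subr_ge0 mulrC.
Qed.

Lemma dotv_le u v : dotv u v <= enorm u * enorm v.
Proof.
have h := cauchy_schwarz u v.
rewrite /enorm -sqrtrM ?dotvv_ge0 //.
apply: le_trans (ler_norm _) _.
by rewrite -sqrtr_sqr ler_sqrt // mulr_ge0 // dotvv_ge0.
Qed.
Lemma dotv_abs_le u v : `|dotv u v| <= enorm u * enorm v.
Proof.
have h := cauchy_schwarz u v.
rewrite /enorm -sqrtrM ?dotvv_ge0 //.
by rewrite -sqrtr_sqr ler_sqrt // mulr_ge0 // dotvv_ge0.
Qed.

Lemma n2D u v : dotv (u + v) (u + v) = dotv u u + 2 * dotv u v + dotv v v.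
Proof. rewrite !(dotvDl, dotvDr) (dotvC v u); ring. Qed.
Lemma n2B u v : dotv (u - v) (u - v) = dotv u u - 2 * dotv u v + dotv v v.
Proof. rewrite !(dotvBl, dotvBr) (dotvC v u); ring. Qed.

Lemma enormD u v : enorm (u + v) <= enorm u + enorm v.
Proof.
rewrite -(@ler_pXn2r _ 2) ?nnegrE ?addr_ge0 ?enorm_ge0 //.
rewrite enorm_sqr n2D sqrrD !enorm_sqr.
have := dotv_le u v; lra.
Qed.
Lemma enormZ (a : R) u : enorm (a *: u) = `|a| * enorm u.
Proof.
by rewrite /enorm dotvZl dotvZr mulrA -expr2 sqrtrM ?sqr_ge0 // sqrtr_sqr.
Qed.
Lemma enormN u : enorm (- u) = enorm u.
Proof. by rewrite -scaleN1r enormZ normrN normr1 mul1r. Qed.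
Lemma enormB u v : enorm (u - v) = enorm (v - u).
Proof. by rewrite -enormN opprB. Qed.
Lemma enorm_le_sqr u v : dotv u u <= dotv v v -> enorm u <= enorm v.
Proof. by move=> h; rewrite ler_sqrt // dotvv_ge0. Qed.
Lemma sqr_le_enorm u v : enorm u <= enorm v -> dotv u u <= dotv v v.
Proof. by move=> h; rewrite -!enorm_sqr ler_pXn2r ?nnegrE ?enorm_ge0. Qed.
Lemma enorm_eq0 u : enorm u = 0 -> u = 0.
Proof. by move=> h; apply: dotvv_eq0; rewrite -enorm_sqr h expr0n. Qed.
End Inner.

Lemma coord_le_mx (R : realType) m (v : 'rV[R]_m) i : `|v 0 i| <= `|v|.
Proof.
have -> : `|v| = mx_norm v by [].
rewrite mx_normrE.
by apply: (le_bigmax _ (fun ij : 'I_1 * 'I_m => `|v ij.1 ij.2|) (0, i)).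
Qed.

Lemma coord_le_enorm (R : realType) m (v : 'rV[R]_m) i : `|v 0 i| <= enorm v.
Proof.
rewrite -(@ler_pXn2r _ 2) ?nnegrE ?enorm_ge0 // enorm_sqr real_normK ?num_real //.
rewrite /dotv (bigD1 i) //= -expr2 lerDl.
by apply: sumr_ge0 => j _; rewrite -expr2 sqr_ge0.
Qed.

Lemma mx_le_enorm (R : realType) m (v : 'rV[R]_m) : `|v| <= enorm v.
Proof.
have -> : `|v| = mx_norm v by [].
rewrite mx_normrE.
apply: bigmax_le; first exact: enorm_ge0.
move=> [a j] _ /=; rewrite (ord1 a); exact: coord_le_enorm.
Qed.

Lemma enorm_le_mx (R : realType) m (v : 'rV[R]_m) : enorm v <= (m%:R + 1) * `|v|.
Proof.
have h : dotv v v <= m%:R * `|v| ^+ 2.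
  rewrite /dotv.
  have -> : m%:R * `|v| ^+ 2 = \sum_(i < m) `|v| ^+ 2.
    by rewrite sumr_const card_ord mulr_natl.
  apply: ler_sum => i _.
  rewrite -expr2 -real_normK ?num_real // ler_pXn2r ?nnegrE ?normr_ge0 //.
  exact: coord_le_mx.
rewrite -(@ler_pXn2r _ 2) ?nnegrE ?enorm_ge0 ?mulr_ge0 ?normr_ge0 ?addr_ge0 ?ler0n //.
rewrite enorm_sqr; apply: le_trans h _.
rewrite exprMn ler_wpM2r ?sqr_ge0 //.
have hm : (0 : R) <= m%:R by rewrite ler0n.
nra.
Qed.

Lemma convX (R : realType) m (X : set 'rV[R]_m) a b (s : R) :
  convex_set X -> X a -> X b -> 0 <= s -> s <= 1 -> X (s *: a + (1 - s) *: b).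
Proof.
move=> cX Xa Xb s0 s1.
have := cX a b (Itv01 s0 s1).
by rewrite !inE => /(_ Xa Xb).
Qed.

Lemma proj_ineq (R : realType) m (X : set 'rV[R]_m) Pj y z :
  is_projection X Pj -> convex_set X -> X z ->
  dotv (y - Pj y) (z - Pj y) <= 0.
Proof.
move=> hP cX Xz.
have [Xp minP] := hP y.
set p := Pj y in Xp minP *.
set c := dotv (y - p) (z - p).
set q := dotv (z - p) (z - p).
have key : forall s : R, 0 < s -> s <= 1 -> 2 * c <= s * q.
  move=> s s0 s1.
  have Xs := convX cX Xz Xp (ltW s0) s1.
  have := sqr_le_enorm (minP _ Xs).
  have -> : y - (s *: z + (1 - s) *: p) = (y - p) - s *: (z - p).
    by rewrite scalerBr scalerBl scale1r; apply/rowP => i; rewrite !mxE; ring.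
  rewrite [X in _ <= X]n2B !(dotvZr, dotvZl) -/c -/q => h.
  have : s * (2 * c) <= s * (s * q) by lra.
  by rewrite ler_pM2l.
rewrite leNgt; apply/negP => cpos.
have q0 : 0 <= q by apply: dotvv_ge0.
have cq : 0 < c + q by lra.
have := key (c / (c + q)).
rewrite divr_gt0 // ler_pdivrMr // mul1r lerDl q0 => /(_ isT isT).
rewrite mulrAC ler_pdivlMr //.
nra.
Qed.
Section Main.
Variables (R : realType) (m : nat)
  (g : 'rV[R]_m -> R) (X : set 'rV[R]_m)
  (Pj : 'rV[R]_m -> 'rV[R]_m) (G : 'rV[R]_m -> 'rV[R]_m) (K : R)
  (alpha beta : nat -> R) (x : nat -> 'rV[R]_m).
Hypotheses (cX : convex_set X) (hP : is_projection X Pj)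
  (hG : forall y, is_subgradient (gplus g) y (G y))
  (K0 : 0 <= K) (GK : forall y, enorm (G y) <= K)
  (ha : forall t, 0 <= alpha t <= 1) (hb : forall t, 0 <= beta t)
  (hx : forall t,
     let xi := x t - beta t *: G (x t) in
     let phi := alpha t *: (xi - Pj xi) in
     x t.+1 = xi - phi).

Let F y := gplus g y.
Let Dd y := enorm (y - Pj y).
Let xi t := x t - beta t *: G (x t).

Lemma x_succ t : x t.+1 = xi t - alpha t *: (xi t - Pj (xi t)).
Proof. exact: hx. Qed.

Lemma F_ge0 y : 0 <= F y.
Proof. by rewrite /F /gplus le_max lexx orbT. Qed.

Lemma F_lip y y' : F y <= F y' + K * enorm (y - y').
Proof.
have h := hG y y'.
have h2 := dotv_abs_le (G y) (y' - y).
have h3 : enorm (G y) * enorm (y' - y) <= K * enorm (y - y').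
  by rewrite (enormB y') ler_wpM2r ?enorm_ge0.
have h4 : - dotv (G y) (y' - y) <= `|dotv (G y) (y' - y)|.
  by rewrite -normrN ler_norm.
rewrite /F. move: h h2 h3 h4. set d := dotv _ _.
move=> h h2 h3 h4; lra.
Qed.

Lemma Dd_lip y y' : Dd y <= Dd y' + enorm (y - y').
Proof.
have [Xp _] := hP y'.
have [_ minP] := hP y.
apply: le_trans (minP _ Xp) _.
have -> : y - Pj y' = (y' - Pj y') + (y - y') by apply/rowP => i; rewrite !mxE; ring.
exact: enormD.
Qed.

Lemma xi_dist t : enorm (x t - xi t) <= beta t * K.
Proof.
have -> : x t - xi t = beta t *: G (x t) by rewrite /xi; apply/rowP => i; rewrite !mxE; ring.
rewrite enormZ ger0_norm //.
by rewrite ler_wpM2l.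
Qed.

Lemma Dd_succ t : Dd (x t.+1) <= Dd (xi t).
Proof.
have [Xp _] := hP (xi t).
have [_ minP] := hP (x t.+1).
apply: le_trans (minP _ Xp) _.
have -> : x t.+1 - Pj (xi t) = (1 - alpha t) *: (xi t - Pj (xi t)).
  by rewrite x_succ; apply/rowP => i; rewrite !mxE; ring.
have /andP[a0 a1] := ha t.
by rewrite enormZ ger0_norm ?subr_ge0 // ler_piMl ?enorm_ge0 // lerBlDr lerDl.
Qed.

Lemma Dd_step t : Dd (x t.+1) <= Dd (x t) + beta t * K.
Proof.
apply: le_trans (Dd_succ t) _.
apply: le_trans (Dd_lip _ (x t)) _.
by rewrite enormB lerD2l xi_dist.
Qed.

Lemma Dd_x_xi t : Dd (x t) <= Dd (xi t) + beta t * K.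
Proof.
apply: le_trans (Dd_lip _ (xi t)) _.
by rewrite lerD2l xi_dist.
Qed.

Lemma fejer z t : X z -> g z <= 0 ->
  dotv (x t.+1 - z) (x t.+1 - z) <= dotv (x t - z) (x t - z)
    - (2 * beta t * F (x t) + alpha t * Dd (xi t) ^+ 2) + beta t ^+ 2 * K ^+ 2.
Proof.
move=> Xz gz.
have Fz : F z = 0 by rewrite /F /gplus max_r.
have h1 := hG (x t) z; rewrite -/(F _) -/(F z) Fz in h1.
set u := xi t - Pj (xi t).
have hu : Dd (xi t) ^+ 2 = dotv u u by rewrite enorm_sqr.
have pr := proj_ineq (xi t) hP cX Xz; rewrite -/u in pr.
have nG : dotv (G (x t)) (G (x t)) <= K ^+ 2.
  by rewrite -enorm_sqr ler_pXn2r ?nnegrE ?enorm_ge0.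
have e1 : x t.+1 - z = (xi t - z) - alpha t *: u.
  by rewrite x_succ; apply/rowP => i; rewrite !mxE; ring.
have e2 : xi t - z = (x t - z) - beta t *: G (x t).
  by rewrite /xi; apply/rowP => i; rewrite !mxE; ring.
have e3 : xi t - z = u - (z - Pj (xi t)).
  by rewrite /u; apply/rowP => i; rewrite !mxE; ring.
have /andP[a0 a1] := ha t.
have b0 := hb t.
have hA : dotv (x t.+1 - z) (x t.+1 - z) <=
    dotv (xi t - z) (xi t - z) - alpha t * dotv u u.
  rewrite e1 [X in X <= _]n2B !(dotvZr, dotvZl).
  have : dotv (xi t - z) u = dotv u u - dotv (z - Pj (xi t)) u.
    by rewrite e3 dotvBl.
  rewrite (dotvC (z - _)) => ->.
  have uu := dotvv_ge0 u.
  have q1 : 0 <= alpha t * ((1 - alpha t) * dotv u u).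
    by rewrite mulr_ge0 // mulr_ge0 // subr_ge0.
  have q2 : alpha t * dotv u (z - Pj (xi t)) <= 0 by rewrite mulr_ge0_le0.
  move: q1 q2; set c := dotv u _; set a := alpha t; set w := dotv u u.
  move=> q1 q2. have e : a * ((1 - a) * w) = a * w - a * (a * w) by ring.
  lra.
have hB : dotv (xi t - z) (xi t - z) <=
    dotv (x t - z) (x t - z) - 2 * beta t * F (x t) + beta t ^+ 2 * K ^+ 2.
  rewrite e2 [X in X <= _]n2B !(dotvZr, dotvZl).
  have : F (x t) <= dotv (x t - z) (G (x t)).
    have e : dotv (x t - z) (G (x t)) = - dotv (G (x t)) (z - x t).
      by rewrite -[x t - z]opprB dotvNl dotvC.
    rewrite e; lra.
  nra.
rewrite hu. lra.
Qed.

Let w t := 2 * beta t * F (x t) + alpha t * Dd (xi t) ^+ 2.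

Lemma w_ge0 t : 0 <= w t.
Proof.
have /andP[a0 _] := ha t.
have b0 := hb t.
apply: addr_ge0; first by rewrite mulr_ge0 ?F_ge0 // mulr_ge0.
by rewrite mulr_ge0 // sqr_ge0.
Qed.

Lemma fejer_sum z s n : X z -> g z <= 0 -> (s <= n)%N ->
  dotv (x n - z) (x n - z) + \sum_(s <= t < n) w t <=
  dotv (x s - z) (x s - z) + K ^+ 2 * \sum_(s <= t < n) beta t ^+ 2.
Proof.
move=> Xz gz; elim: n => [|n IH].
  by rewrite leqn0 => /eqP ->; rewrite !big_geq // addr0 mulr0 addr0.
rewrite leq_eqVlt => /orP[/eqP <-|sn].
  by rewrite !big_geq // addr0 mulr0 addr0.
have {}IH := IH sn.
rewrite !big_nat_recr //=.
have := fejer n Xz gz.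
rewrite -/(w n).
move: IH; set A := \sum_(s <= i < n) w i; set B := \sum_(s <= i < n) _.
move=> IH h. lra.
Qed.

Lemma Dd_tele t1 n : (t1 <= n)%N ->
  Dd (x n) <= Dd (x t1) + K * \sum_(t1 <= t < n) beta t.
Proof.
elim: n => [|n IH].
  by rewrite leqn0 => /eqP ->; rewrite big_geq // mulr0 addr0.
rewrite leq_eqVlt => /orP[/eqP <-|sn].
  by rewrite big_geq // mulr0 addr0.
have {}IH := IH sn.
rewrite big_nat_recr //= mulrDr.
have := Dd_step n. rewrite (mulrC (beta n)). lra.
Qed.

Hypotheses (hsa : series alpha @ \oo --> +oo) (hsb : series beta @ \oo --> +oo)
  (hb2 : cvgn (series (fun t => beta t ^+ 2))).
Variable z0 : 'rV[R]_m.
Hypotheses (Xz0 : X z0) (gz0 : g z0 <= 0).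

Let L : R := limn (series (fun t => beta t ^+ 2)).
Lemma Sb2_le n : \sum_(0 <= t < n) beta t ^+ 2 <= L.
Proof.
have := @nondecreasing_cvgn_le _ (series (fun t => beta t ^+ 2)) _ hb2 n.
apply.
by apply: nondecreasing_series => k _ _; rewrite sqr_ge0.
Qed.

Lemma Sb2_tail s n : (s <= n)%N ->
  \sum_(s <= t < n) beta t ^+ 2 <= L - \sum_(0 <= t < s) beta t ^+ 2.
Proof.
move=> sn; have := Sb2_le n; rewrite (big_cat_nat (leq0n s) sn) /=; lra.
Qed.

Let Mx := dotv (x 0 - z0) (x 0 - z0) + K ^+ 2 * L.

Lemma w_sum0 n : \sum_(0 <= t < n) w t <= Mx.
Proof.
have h3 := fejer_sum Xz0 gz0 (leq0n n).
have h1 := dotvv_ge0 (x n - z0).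
have : K ^+ 2 * \sum_(0 <= t < n) beta t ^+ 2 <= K ^+ 2 * L.
  by rewrite ler_wpM2l ?sqr_ge0 // Sb2_le.
move: h1 h3; rewrite /Mx.
set a := dotv _ _; set b := dotv _ _; set c := \sum_(0 <= t < n) w t.
set d := K ^+ 2 * _; set e := K ^+ 2 * L.
move=> *; lra.
Qed.

Lemma Mx_ge0 : 0 <= Mx.
Proof.
have := w_sum0 0.
rewrite big_geq //.
Qed.

Lemma w_sum s n : \sum_(s <= t < n) w t <= Mx.
Proof.
case: (leqP s n) => sn.
have h2 := w_sum0 n.
rewrite (big_cat_nat (leq0n s) sn) /= in h2.
have h1 : 0 <= \sum_(0 <= t < s) w t by apply: sumr_ge0 => i _; apply: w_ge0.
move: h1 h2.
set a := \sum_(0 <= t < s) w t; set b := \sum_(s <= t < n) w t.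
move=> h1 h2. lra.
rewrite big_geq. exact: Mx_ge0. exact: ltnW.
Qed.

Lemma ev_ex (P : nat -> Prop) s : (\forall n \near \oo, P n) ->
  exists n, (s <= n)%N /\ P n.
Proof.
move=> [N _ HN]; exists (maxn s N); split; first exact: leq_maxl.
by apply: HN; rewrite /= leq_maxr.
Qed.

Section Liminf.
Variables (eps : R) (N : nat).
Hypothesis eps0 : 0 < eps.
Hypothesis Hbig : forall t, (N <= t)%N -> 2 * eps <= F (x t) + Dd (x t).

Lemma step1 s : exists t, (s <= t)%N /\ F (x t) < eps.
Proof.
apply: contrapT => H.
have Hs : forall t, (s <= t)%N -> eps <= F (x t).
  move=> t st; rewrite leNgt; apply/negP => h; apply: H; by exists t.
have hb1 : forall n, eps * \sum_(s <= t < n) beta t <= Mx.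
  move=> n; apply: le_trans (w_sum s n).
  rewrite mulr_sumr; apply: ler_sum_nat => i /andP[si _].
  have := Hs i si; have := hb i; have /andP[a0 _] := ha i.
  have := sqr_ge0 (Dd (xi i)); rewrite /w.
  set f := F (x i); set d := Dd (xi i) ^+ 2; set b := beta i; set a := alpha i.
  move=> h1 h2 h3.
  have : 0 <= a * d by apply: mulr_ge0.
  have : 0 <= b * (f - eps) by rewrite mulr_ge0 // subr_ge0.
  have : 0 <= b * eps by rewrite mulr_ge0 // ltW.
  nra.
have /cvgryPgt /(_ (\sum_(0 <= t < s) beta t + Mx / eps)) := hsb.
move=> /(ev_ex s) [n [sn]]; rewrite /series /= (big_cat_nat (leq0n s) sn) /=.
have := hb1 n.
set a := \sum_(0 <= t < s) beta t; set b := \sum_(s <= t < n) beta t.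
rewrite -ler_pdivlMl // => h1 h2.
have : b <= Mx / eps by rewrite mulrC.
lra.
Qed.

Lemma step2 s : exists t, (s <= t)%N /\ Dd (xi t) < eps / 2.
Proof.
apply: contrapT => H.
have e2 : 0 < eps / 2 by rewrite divr_gt0.
have Hs : forall t, (s <= t)%N -> eps / 2 <= Dd (xi t).
  move=> t st; rewrite leNgt; apply/negP => h; apply: H; by exists t.
have hb1 : forall n, (eps / 2) ^+ 2 * \sum_(s <= t < n) alpha t <= Mx.
  move=> n; apply: le_trans (w_sum s n).
  rewrite mulr_sumr; apply: ler_sum_nat => i /andP[si _].
  have := Hs i si; have b0 := hb i; have /andP[a0 _] := ha i.
  have f0 := F_ge0 (x i); rewrite /w.
  set f := F (x i); set d := Dd (xi i); set b := beta i; set a := alpha i.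
  move=> h1.
  have : (eps / 2) ^+ 2 <= d ^+ 2 by rewrite ler_pXn2r // ?nnegrE ltW //; apply: lt_le_trans h1.
  move=> h2.
  have : 0 <= a * (d ^+ 2 - (eps / 2) ^+ 2) by rewrite mulr_ge0 // subr_ge0.
  have : 0 <= b * f by apply: mulr_ge0.
  nra.
have e4 : 0 < (eps / 2) ^+ 2 by rewrite exprn_gt0.
have /cvgryPgt /(_ (\sum_(0 <= t < s) alpha t + Mx / (eps / 2) ^+ 2)) := hsa.
move=> /(ev_ex s) [n [sn]]; rewrite /series /= (big_cat_nat (leq0n s) sn) /=.
have := hb1 n.
set a := \sum_(0 <= t < s) alpha t; set b := \sum_(s <= t < n) alpha t.
rewrite -ler_pdivlMl // => h1 h2.
have : b <= Mx / (eps / 2) ^+ 2 by rewrite mulrC.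
lra.
Qed.

Lemma step3 : exists N1, forall t, (N1 <= t)%N -> beta t * K <= eps / 4.
Proof.
set c := eps / (4 * (K + 1)).
have c0 : 0 < c by rewrite divr_gt0 // mulr_gt0 // ltr_wpDl.
have := cvg_series_cvg_0 hb2.
move=> /cvgr0Pnorm_lt /(_ (c ^+ 2)) /(_ (exprn_gt0 2 c0)) [N1 _ HN].
exists N1 => t /HN /=; rewrite ger0_norm ?sqr_ge0 // => h.
have b0 := hb t.
have bc : beta t < c by nra.
have -> : eps / 4 = c * (K + 1).
  rewrite /c mulrAC -mulf_div divff ?mulr1 //.
  by rewrite gt_eqF // ltr_wpDl.
have : beta t * K <= beta t * (K + 1) by rewrite ler_wpM2l // lerDl.
have : beta t * (K + 1) <= c * (K + 1).
  apply: ler_wpM2r; [by rewrite addr_ge0 | exact: ltW].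
lra.
Qed.

Lemma step4 N1 (hN1 : forall t, (N1 <= t)%N -> beta t * K <= eps / 4) s :
  (maxn N N1 <= s)%N ->
  exists n, (s <= n)%N /\ eps ^+ 2 / 4 <= K * \sum_(s <= t < n) w t.
Proof.
move=> hs.
have sN : (N <= s)%N := leq_trans (leq_maxl _ _) hs.
have sN1 : (N1 <= s)%N := leq_trans (leq_maxr _ _) hs.
have [t1 [st1 hD1]] := step2 s.
have hx1 : Dd (x t1) < 3 * eps / 4.
  have := Dd_x_xi t1; have := hN1 t1 (leq_trans sN1 st1); lra.
have exP : exists n, (t1 <= n)%N && (F (x n) < eps).
  have [t [t1t h]] := step1 t1; exists t; by rewrite t1t h.
case: (ex_minnP exP) => t2 /andP[t12 hF2] min2.
have hF : forall t, (t1 <= t < t2)%N -> eps <= F (x t).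
  move=> t /andP[a b]; rewrite leNgt; apply/negP => h.
  have := min2 t; rewrite a h /= => /(_ isT); rewrite leqNgt b.
  done.
have hD2 : eps < Dd (x t2).
  have := Hbig (leq_trans sN (leq_trans st1 t12)); lra.
have tele := Dd_tele t12.
move: tele; set B := \sum_(t1 <= t < t2) beta t => tele.
have hB : eps / 4 < K * B by lra.
have hW : eps * B <= \sum_(t1 <= t < t2) w t.
  rewrite /B mulr_sumr; apply: ler_sum_nat => i hi.
  have := hF i hi; have b0 := hb i; have /andP[a0 _] := ha i.
  have := sqr_ge0 (Dd (xi i)); rewrite /w.
  set f := F (x i); set d := Dd (xi i) ^+ 2; set b := beta i; set a := alpha i.
  move=> h1 h2.
  have : 0 <= a * d by apply: mulr_ge0.
  have : 0 <= b * (f - eps) by rewrite mulr_ge0 // subr_ge0.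
  have : 0 <= b * eps by rewrite mulr_ge0 // ltW.
  nra.
have hW2 : \sum_(t1 <= t < t2) w t <= \sum_(s <= t < t2) w t.
  rewrite (big_cat_nat st1 t12) /= lerDr.
  by apply: sumr_ge0 => i _; apply: w_ge0.
exists t2; split; first exact: leq_trans st1 t12.
move: hW hW2 hB.
set W1 := \sum_(t1 <= t < t2) w t; set S := \sum_(s <= t < t2) w t.
move=> hW hW2 hB.
have h1 : K * (eps * B) <= K * S by rewrite ler_wpM2l //; apply: le_trans hW hW2.
have h2 : eps * (eps / 4) < eps * (K * B) by rewrite ltr_pM2l.
have e1 : eps ^+ 2 / 4 = eps * (eps / 4) by rewrite expr2 mulrA.
have e2 : eps * (K * B) = K * (eps * B) by rewrite mulrCA.
rewrite e1; apply: ltW; apply: lt_le_trans h2 _; rewrite e2; exact: h1.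
Qed.

Lemma step5 N1 (hN1 : forall t, (N1 <= t)%N -> beta t * K <= eps / 4) (k : nat) :
  exists n, (maxn N N1 <= n)%N /\
    k%:R * (eps ^+ 2 / 4) <= K * \sum_(maxn N N1 <= t < n) w t.
Proof.
elim: k => [|k [n [hn IH]]].
  exists (maxn N N1); split; first by [].
  by rewrite big_geq // mulr0 mul0r.
have [n' [nn' h]] := step4 hN1 hn.
exists n'; split; first exact: leq_trans hn nn'.
rewrite (big_cat_nat hn nn') /= mulrDr mulrSr mulrDl mul1r.
exact: lerD.
Qed.

Lemma liminf_false : False.
Proof.
have [N1 hN1] := step3.
set c := eps ^+ 2 / 4.
have c0 : 0 < c by rewrite divr_gt0 // exprn_gt0.
set k := (Num.trunc (K * Mx / c)).+1.
have hk : K * Mx / c < k%:R by apply: truncnS_gt.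
have [n [_ h]] := step5 hN1 k.
rewrite -/c in h.
have : K * \sum_(maxn N N1 <= t < n) w t <= K * Mx.
  by rewrite ler_wpM2l //; apply: w_sum.
have : K * Mx < k%:R * c by rewrite -ltr_pdivrMr.
lra.
Qed.
End Liminf.

Lemma liminf eps N : 0 < eps ->
  exists t, (N <= t)%N /\ F (x t) + Dd (x t) < 2 * eps.
Proof.
move=> eps0; apply: contrapT => H.
apply: (@liminf_false eps N eps0) => t Nt.
rewrite leNgt; apply/negP => h; apply: H; by exists t.
Qed.

Lemma liminf' eps N : 0 < eps ->
  exists t, (N <= t)%N /\ F (x t) + Dd (x t) < eps.
Proof.
move=> e0; have [t [Nt h]] := liminf N (divr_gt0 e0 (ltr0n R 2)).
by exists t; split => //; rewrite mulrC divfK ?pnatr_eq0 in h.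
Qed.

Lemma x_bound t : `|x t| <= Num.sqrt Mx + enorm z0.
Proof.
apply: le_trans (mx_le_enorm _) _.
have -> : x t = (x t - z0) + z0 by rewrite subrK.
apply: le_trans (enormD _ _) _; rewrite lerD2r.
rewrite /enorm ler_sqrt; last exact: Mx_ge0.
have h := fejer_sum Xz0 gz0 (leq0n t).
have h1 : 0 <= \sum_(0 <= i < t) w i by apply: sumr_ge0 => i _; apply: w_ge0.
have : K ^+ 2 * \sum_(0 <= t0 < t) beta t0 ^+ 2 <= K ^+ 2 * L.
  by rewrite ler_wpM2l ?sqr_ge0 // Sb2_le.
move: h h1; rewrite /Mx.
set a := dotv _ _; set b := dotv _ _; set c := \sum_(0 <= i < t) w i.
set d := K ^+ 2 * _; set e := K ^+ 2 * L.
move=> *; lra.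
Qed.

Lemma main_conv : exists xs, (X xs /\ g xs <= 0) /\
    (fun t => enorm (x t - xs)) @ \oo --> (0 : R).
Proof.
have hc : forall k : nat, exists t, (k <= t)%N /\ F (x t) + Dd (x t) < k.+1%:R^-1.
  by move=> k; apply: liminf'; rewrite invr_gt0 ltr0n.
have [tk htk] := choice hc.
set r := Num.sqrt Mx + enorm z0.
set A := closed_ball_ (@Num.Def.normr R 'rV[R]_m) 0 r.
have cA : compact A.
  apply: bounded_closed_compact; last exact: closed_closed_ball_.
  exists r; split; first exact: num_real.
  move=> M rM y; rewrite /A /closed_ball_ /= sub0r normrN => hy.
  by apply: le_trans hy (ltW rM).
set y := fun k => x (tk k).
have [xb [Axb clu]] : A `&` cluster (y @ \oo) !=set0.
  apply: (cA (y @ \oo)); exists 0%N => // k _ /=.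
  by rewrite /A /closed_ball_ /= sub0r normrN; apply: x_bound.
have hcl : forall eta N, 0 < eta -> exists k, (N <= k)%N /\ enorm (xb - y k) < eta.
  move=> eta N e0.
  have m1 : 0 < m%:R + 1 :> R by rewrite ltr_wpDl ?ler0n.
  have e'0 : 0 < eta / (m%:R + 1) by rewrite divr_gt0.
  have hA : (y @ \oo) [set v | exists k, (N <= k)%N /\ v = y k].
    by exists N => // k Nk /=; exists k.
  have [v [[k [Nk ->]] hbl]] := clu _ _ hA (nbhsx_ballx xb _ e'0).
  exists k; split => //.
  move: hbl; rewrite -ball_normE /ball_ /= => hbl.
  apply: le_lt_trans (enorm_le_mx _) _.
  have -> : eta = (m%:R + 1) * (eta / (m%:R + 1)).
    by rewrite mulrC divfK // gt_eqF.
  by rewrite ltr_pM2l.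
have hF0 : F xb + Dd xb <= 0.
  apply/ler_addgt0Pr => d d0; rewrite add0r.
  set k0 := Num.trunc (2 / d).
  have hk0 : 2 / d < k0.+1%:R by apply: truncnS_gt.
  have K1 : 0 < K + 1 by rewrite ltr_wpDl.
  have eta0 : 0 < d / (2 * (K + 1)) by rewrite divr_gt0 // mulr_gt0.
  have [k [k0k hk]] := hcl _ k0 eta0.
  have [_ hyk] := htk k.
  have hFl := F_lip xb (y k).
  have hDl := Dd_lip xb (y k).
  have hq : (2 / d) * d = 2 by rewrite divfK // gt_eqF.
  have k1 : k0.+1%:R <= k.+1%:R :> R by rewrite ler_nat.
  set u := k.+1%:R^-1 in hyk.
  have up : 0 < u by rewrite invr_gt0 ltr0n.
  have uk : u * k.+1%:R = 1 by rewrite mulVf // pnatr_eq0.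
  have hu : 2 * u < d.
    have hs : 0 < k.+1%:R - 2 / d by rewrite subr_gt0; exact: lt_le_trans hk0 k1.
    have := mulr_gt0 (mulr_gt0 up d0) hs.
    move: hq uk; set q := 2 / d; set kk := k.+1%:R => hq uk h.
    nra.
  have he : (K + 1) * enorm (xb - y k) < d / 2.
    have -> : d / 2 = (K + 1) * (d / (2 * (K + 1))).
      have hK : K + 1 != 0 by rewrite gt_eqF.
      by field.
    by rewrite ltr_pM2l.
  have en0 := enorm_ge0 (xb - y k).
  move: hyk hFl hDl he; rewrite /y.
  set a := F (x (tk k)); set b := Dd (x (tk k)); set e := enorm _.
  move=> *. nra.
have Fb0 : F xb = 0.
  have := F_ge0 xb; have := enorm_ge0 (xb - Pj xb); rewrite /Dd in hF0; lra.
have Db0 : Dd xb = 0.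
  have := F_ge0 xb; have := enorm_ge0 (xb - Pj xb); rewrite /Dd in hF0 *; lra.
have hXb : X xb.
  have [XP _] := hP xb.
  have := enorm_eq0 Db0; move/eqP; rewrite subr_eq0 => /eqP ->; exact: XP.
have hgb : g xb <= 0.
  by move: Fb0; rewrite /F /gplus => /eqP; rewrite eq_le ge_max => /andP[/andP[]].
exists xb; split; first by split.
apply/cvgrPdist_le => e e0.
have K2 : 0 < K ^+ 2 + 1 by rewrite ltr_wpDl ?sqr_ge0.
set c := e ^+ 2 / (4 * (K ^+ 2 + 1)).
have c0 : 0 < c by rewrite divr_gt0 ?exprn_gt0 // mulr_gt0.
have hL : series (fun t => beta t ^+ 2) @ \oo --> L := hb2.
move/cvgrPdist_lt: hL => /(_ c c0) [N3 _ HN3].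
have [k [N3k hk]] := hcl (e / 2) N3 (divr_gt0 e0 (ltr0n R 2)).
have [ktk _] := htk k.
set s := tk k.
have N3s : (N3 <= s)%N := leq_trans N3k ktk.
exists s => // t /= st.
have h1 := fejer_sum hXb hgb st.
have h2 : 0 <= \sum_(s <= i < t) w i by apply: sumr_ge0 => i _; apply: w_ge0.
have h3 := Sb2_tail st.
have h4 := HN3 s N3s; rewrite /series /= in h4.
have h5 : L - \sum_(0 <= i < s) beta i ^+ 2 < c.
  by apply: le_lt_trans h4; apply: ler_norm.
have h6 : K ^+ 2 * \sum_(s <= i < t) beta i ^+ 2 <= K ^+ 2 * c.
  rewrite ler_wpM2l ?sqr_ge0 //; apply: ltW; exact: le_lt_trans h3 h5.
have h7 : K ^+ 2 * c <= e ^+ 2 / 4.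
  rewrite /c mulrA ler_pdivrMr ?mulr_gt0 //.
  have -> : e ^+ 2 / 4 * (4 * (K ^+ 2 + 1)) = e ^+ 2 * (K ^+ 2 + 1) by field.
  by rewrite mulrC ler_wpM2l ?sqr_ge0 // lerDl.
have h8 : dotv (x s - xb) (x s - xb) <= e ^+ 2 / 4.
  rewrite -enorm_sqr enormB.
  have -> : e ^+ 2 / 4 = (e / 2) ^+ 2 by field.
  have e2 : 0 <= e / 2 by rewrite divr_ge0 // ltW.
  by rewrite ler_pXn2r ?nnegrE ?enorm_ge0 //; apply: ltW.
have h9 : enorm (x t - xb) ^+ 2 <= e ^+ 2.
  rewrite enorm_sqr.
  move: h1 h2 h6 h7 h8.
  set a := dotv (x t - xb) _; set b := dotv (x s - xb) _.
  set p := \sum_(s <= i < t) w i; set q := K ^+ 2 * \sum_(s <= i < t) beta i ^+ 2.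
  have := sqr_ge0 e.
  move=> *; lra.
rewrite sub0r normrN ger0_norm ?enorm_ge0 //.
by move: h9; rewrite ler_pXn2r ?nnegrE ?enorm_ge0 // ltW.
Qed.
End Main.

Theorem theorem2 (R : realType) (m : nat)
  (g : 'rV[R]_m -> R) (X : set 'rV[R]_m)
  (Pj : 'rV[R]_m -> 'rV[R]_m) (G : 'rV[R]_m -> 'rV[R]_m) (K : R)
  (alpha beta : nat -> R) (x : nat -> 'rV[R]_m) :
  continuous g -> convex_fun g ->
  closed X -> convex_set X ->
  (exists y, X y /\ g y <= 0) ->
  is_projection X Pj ->
  (forall y, is_subgradient (gplus g) y (G y)) ->
  0 <= K -> (forall y, enorm (G y) <= K) ->
  (forall t, 0 <= alpha t <= 1) ->
  series alpha @ \oo --> +oo ->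
  cvgn (series (fun t => alpha t ^+ 2)) ->
  (forall t, 0 <= beta t) ->
  series beta @ \oo --> +oo ->
  cvgn (series (fun t => beta t ^+ 2)) ->
  (forall t,
     let xi := x t - beta t *: G (x t) in
     let phi := alpha t *: (xi - Pj xi) in
     x t.+1 = xi - phi) ->
  exists xs, (X xs /\ g xs <= 0) /\
    (fun t => enorm (x t - xs)) @ \oo --> (0 : R).
Proof.
move=> _ _ _ cX [z0 [Xz0 gz0]] hP hG K0 GK ha hsa hb2' hb hsb hb2 hx.
exact: (main_conv cX hP hG K0 GK ha hb hx hsa hsb hb2 Xz0 gz0).
Qed.
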